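(* With the matrices defined in the context, $B\,Q_\beta=V_\beta\,B$; i.e. the diagram $C_1\xrightarrow{B}C_0$, $Q_\beta:C_1\to C_1$, $V_\beta:C_0\to C_0$, $C_1\xrightarrow{B}C_0$ commutes.
   Context: Setting. $I\subset\mathbb{R}$ compact interval; $f_i(x)=\rho_ix+\varrho_i$ ($i=1,\dots,n$), $0<|\rho_i|<1$, IFS with open set condition; $I$ is the union of a nonempty open interval $I_h$ (hole) and $f_1(I),\dots,f_n(I)$, with pairwise disjoint interiors and $I_h$ disjoint from the $f_i(I)$; $F(x)=f_i^{-1}(x)$ on $f_i(I)$. The laps and hole have endpoints $a_1<\dots<a_{n+2}$, hole $(a_h,a_{h+1})$; interior endpoints are turning/discontinuity points. Assume the forward orbit of every one-sided endpoint $a_i^\pm$ is finite. Markov partition: the orbit points and the $a_i$ cut $I$ into intervals $J_1,\dots,J_m$; $A=[a_{ij}]$, $a_{ij}=1$ iff $F(\mathrm{int}J_j)\supseteq\mathrm{int}J_i$; $Q_\beta=[a_{ij}|F'|_{J_j}|^{-\beta}]$, $\beta\in\mathbb{R}$. Points $y^{(1)},\dots,y^{(q)}$: the one-sided endpoints $a_1^+,a_2^-,a_2^+,\dots,a_{n+2}^-$ (with $a_i^-,a_i^+$ consecutive) together with all other points of their forward orbits, ordered along $I$; $C_0=\mathbb{R}^q$ with $y^{(i)}$ the $i$-th standard basis vector, $C_1=\mathbb{R}^m$ with basis $J_1,\dots,J_m$. $B$ is the $q\times m$ matrix with, in column $j$, $-1$ in row $i$ and $+1$ in row $i+1$ where $y^{(i)},y^{(i+1)}$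 are the lower and upper endpoints of $J_j$ (border map $\partial J_j=y^{(i+1)}-y^{(i)}$), other entries $0$. $V_\beta=[v_{ij}]$ ($q\times q$): if $F(y^{(j)})=y^{(i)}$, $v_{ij}=\varepsilon(y^{(j)})|F'(y^{(j)})|^{-\beta}$ with $\varepsilon$ the sign of $F'$ at $y^{(j)}$ (column zero for limits from inside the hole); for every pair of consecutive entries that are the two one-sided versions of a turning/discontinuity point between $y^{(j)}$ and $y^{(i)}$: if $y^{(i)}>y^{(j)}$, pair $y^{(k)},y^{(k+1)}$, $j\le k<i$, set $v_{kj}=v_{ij}$, $v_{k+1,j}=-v_{ij}$; if $y^{(i)}<y^{(j)}$, pair $y^{(k-1)},y^{(k)}$, $i<k\le j$, set $v_{k-1,j}=-v_{ij}$, $v_{kj}=v_{ij}$; all other entries $0$. *)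

(* Defs.v *)
From HB Require Import structures.
From mathcomp Require Import all_boot all_order all_algebra.
From mathcomp Require Import all_classical all_reals all_analysis.
Set Implicit Arguments. Unset Strict Implicit. Unset Printing Implicit Defensive.
Import Order.TTheory GRing.Theory Num.Theory numFieldNormedType.Exports.
Local Open Scope ring_scope.
Local Open Scope classical_set_scope.

Section HoleIFS.
Variable R : realType.
Variable n : nat.
(* IFS f_i(x) = rho_i x + varrho_i, i : 'I_n (0-based);  I = [c,d];
   hole I_h = (hl,hr). *)
Variables (rho varrho : 'I_n -> R) (c d hl hr : R).

(* one-sided points: (x,false) = x^-  (limit from the left),
                     (x,true)  = x^+  (limit from the right) *)
Definition pt := (R * bool)%type.

Definition fi (i : 'I_n) (x : R) : R := rho i * x + varrho i.
Definition Finv (i : 'I_n) (x : R) : R := (x - varrho i) / rho i.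

Definition Iset : set R := [set x | c <= x <= d].
Definition hole : set R := [set x | hl < x < hr].
Definition lap (i : 'I_n) : set R := fi i @` Iset.

Definition open_set_condition : Prop :=
  exists U : set R, [/\ open U, U !=set0,
    (forall i, fi i @` U `<=` U) &
    (forall i j, i != j -> fi i @` U `&` fi j @` U = set0)].

Definition lapmin (i : 'I_n) : R := Num.min (fi i c) (fi i d).
Definition lapmax (i : 'I_n) : R := Num.max (fi i c) (fi i d).

(* the lap on whose side the one-sided point lies (None: hole / outside) *)
Definition lap_of_pt (p : pt) : option 'I_n :=
  [pick i | if p.2 then (lapmin i <= p.1) && (p.1 < lapmax i)
            else (lapmin i < p.1) && (p.1 <= lapmax i)].

Definition Fpt (p : pt) : option pt :=
  if lap_of_pt p is Some i then
    Some (Finv i p.1, if 0 < rho i then p.2 else ~~ p.2)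
  else None.

Definition Fder (p : pt) : R :=
  if lap_of_pt p is Some i then (rho i)^-1 else 0.

Definition iterF (k : nat) (p : pt) : option pt :=
  iter k (fun o => obind Fpt o) (Some p).

Definition Evals : seq R :=
  [:: c; d; hl; hr] ++ [seq fi i c | i <- enum 'I_n]
                    ++ [seq fi i d | i <- enum 'I_n].

(* one-sided endpoints a_1^+, a_2^-, a_2^+, ..., a_{n+2}^- *)
Definition is_endpt (p : pt) : bool :=
  [&& p.1 \in Evals, ~~ ((p.1 == c) && ~~ p.2) & ~~ ((p.1 == d) && p.2)].

(* turning / discontinuity points: the interior endpoints a_2..a_{n+1} *)
Definition is_turning (x : R) : bool := (x \in Evals) && (c < x < d).

Definition forward_orbit (p : pt) : set pt :=
  [set p' | exists k, iterF k p = Some p'].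

Definition orbit_points : set pt :=
  [set p | exists2 e, is_endpt e & forward_orbit e p].

Definition ltpt (p p' : pt) : bool :=
  (p.1 < p'.1) || [&& p.1 == p'.1, ~~ p.2 & p'.2].

Variable ys : seq pt.   (* y^(1), ..., y^(q) in order (0-based) *)
Variable beta : R.

Definition qq : nat := size ys.
Definition yp (i : nat) : pt := nth (0, false) ys i.

(* the cut points (values of the y's) and the intervals J_j = [Jlo j, Jhi j] *)
Definition vals : seq R := undup [seq p.1 | p <- ys].
Definition mm : nat := (size vals).-1.
Definition Jlo (j : nat) : R := nth 0 vals j.
Definition Jhi (j : nat) : R := nth 0 vals j.+1.
Definition intJ (j : nat) : set R := [set x | Jlo j < x < Jhi j].

Definition lap_of_J (j : nat) : option 'I_n :=
  [pick k | `[< intJ j `<=` lap k >] ].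

(* Q_beta = [a_ij |F'|_{J_j}|^{-beta}],  a_ij = 1 iff F(int J_j) ⊇ int J_i *)
Definition Qmx : 'M[R]_mm :=
  \matrix_(i, j)
    match lap_of_J j with
    | Some k => if `[< intJ i `<=` Finv k @` intJ j >]
                then `|(rho k)^-1| `^ (- beta) else 0
    | None => 0
    end.

(* border map: dJ_j = (upper endpoint)^- - (lower endpoint)^+ *)
Definition Bmx : 'M[R]_(qq, mm) :=
  \matrix_(i, j)
    if yp i == (Jlo j, true) then -1
    else if yp i == (Jhi j, false) then 1 else 0.

Definition pairfirst (r : nat) : bool :=
  [&& r.+1 < qq, (yp r).2 == false, yp r.+1 == ((yp r).1, true)
    & is_turning (yp r).1]%N.
Definition pairsecond (r : nat) : bool := (0 < r)%N && pairfirst r.-1.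

Definition Vmx : 'M[R]_qq :=
  \matrix_(r, j)
    match Fpt (yp j) with
    | Some p' =>
      if p' \in ys then
        let i := index p' ys in
        let v := Num.sg (Fder (yp j)) * `|Fder (yp j)| `^ (- beta) in
        if (j < i)%N then
          (if pairfirst r && (j <= r < i)%N then v
           else if pairsecond r && (j <= r.-1 < i)%N then - v
           else if nat_of_ord r == i then v else 0)
        else if (i < j)%N then
          (if pairsecond r && (i < r <= j)%N then v
           else if pairfirst r && (i < r.+1 <= j)%N then - v
           else if nat_of_ord r == i then v else 0)
        else (if nat_of_ord r == i then v else 0)
      else 0
    | None => 0
    end.

End HoleIFS.

(* Main.v *)
Require Import Defs.
From HB Require Import structures.
From mathcomp Require Import all_boot all_order all_algebra.
From mathcomp Require Import all_classical all_reals all_analysis.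
From mathcomp Require Import zify ring lra.
Import Order.TTheory GRing.Theory Num.Theory numFieldNormedType.Exports.
Local Open Scope ring_scope.
Local Open Scope classical_set_scope.

Section Pf.
Variables (R : realType) (n : nat) (rho varrho : 'I_n -> R) (c d hl hr beta : R).
Hypotheses (Hcd : c <= d) (Hrho : forall i, 0 < `|rho i| < 1) (Hh : hl < hr)
  (HI : Iset c d = hole hl hr `|` \bigcup_(i in setT) lap rho varrho c d i)
  (Hint : forall i j, i != j ->
     interior (lap rho varrho c d i) `&` interior (lap rho varrho c d j) = set0)
  (Hhole : forall i, hole hl hr `&` lap rho varrho c d i = set0).

Local Notation fi := (fi rho varrho).
Local Notation Finv := (Finv rho varrho).
Local Notation lap := (lap rho varrho c d).
Local Notation lapmin := (lapmin rho varrho c d).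
Local Notation lapmax := (lapmax rho varrho c d).

Lemma rho_neq0 i : rho i != 0.
Proof. by have /andP[+ _] := Hrho i; rewrite normr_gt0. Qed.

Lemma fiK i x : fi i (Finv i x) = x.
Proof. rewrite /Defs.fi /Defs.Finv mulrC divfK ?rho_neq0 //; by rewrite subrK. Qed.

Lemma FinvK i x : Finv i (fi i x) = x.
Proof. by rewrite /Defs.fi /Defs.Finv addrK mulrAC divff ?mul1r ?rho_neq0. Qed.

Lemma IsetE x : Iset c d x <-> hole hl hr x \/ exists i, lap i x.
Proof.
rewrite HI; split.
  by case=> [h|[i _ h]]; [left|right; exists i].
by case=> [h|[i h]]; [left|right; exists i].
Qed.

Lemma hole_I x : hl < x < hr -> c <= x <= d.
Proof. by move=> h; have : Iset c d x by apply/IsetE; left. Qed.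

Lemma lap_I i x : lap i x -> c <= x <= d.
Proof. by move=> h; have : Iset c d x by apply/IsetE; right; exists i. Qed.

Lemma c_lt_d : c < d.
Proof.
have h1 := hole_I ((hl + (hl + hr) / 2) / 2).
have h2 := hole_I ((hr + (hl + hr) / 2) / 2).
have /andP[h1a h1b] : c <= (hl + (hl + hr) / 2) / 2 <= d.
  by apply: h1; apply/andP; split; have Hh' := Hh; lra.
have /andP[h2a h2b] : c <= (hr + (hl + hr) / 2) / 2 <= d.
  by apply: h2; apply/andP; split; have Hh' := Hh; lra.
have Hh' := Hh; lra.
Qed.

Lemma fi_ltp i a b : 0 < rho i -> (fi i a < fi i b) = (a < b).
Proof. by move=> h; rewrite /Defs.fi ltrD2r ltr_pM2l. Qed.
Lemma fi_lep i a b : 0 < rho i -> (fi i a <= fi i b) = (a <= b).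
Proof. by move=> h; rewrite /Defs.fi lerD2r ler_pM2l. Qed.
Lemma fi_ltn i a b : rho i < 0 -> (fi i a < fi i b) = (b < a).
Proof. by move=> h; rewrite /Defs.fi ltrD2r ltr_nM2l. Qed.
Lemma fi_len i a b : rho i < 0 -> (fi i a <= fi i b) = (b <= a).
Proof. by move=> h; rewrite /Defs.fi lerD2r ler_nM2l. Qed.

Lemma rho_sign i : 0 < rho i \/ rho i < 0.
Proof. by have := rho_neq0 i; rewrite neq_lt => /orP[]; [right|left]. Qed.

Lemma mm_p i : 0 < rho i -> lapmin i = fi i c /\ lapmax i = fi i d.
Proof.
move=> h; have hl' : fi i c <= fi i d by rewrite fi_lep // Hcd.
by rewrite /Defs.lapmin /Defs.lapmax min_l // max_r.
Qed.

Lemma mm_n i : rho i < 0 -> lapmin i = fi i d /\ lapmax i = fi i c.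
Proof.
move=> h; have hl' : fi i d <= fi i c by rewrite fi_len // Hcd.
by rewrite /Defs.lapmin /Defs.lapmax min_r // max_l.
Qed.

Lemma lapmin_lt i : lapmin i < lapmax i.
Proof.
have := c_lt_d => cd.
case: (rho_sign i) => h.
  by have [-> ->] := mm_p i h; rewrite fi_ltp.
by have [-> ->] := mm_n i h; rewrite fi_ltn.
Qed.

Lemma lap_bounds i x : lap i x -> lapmin i <= x <= lapmax i.
Proof.
case=> y /= /andP[y1 y2] <-.
case: (rho_sign i) => h.
  by have [-> ->] := mm_p i h; rewrite !fi_lep // y1 y2.
by have [-> ->] := mm_n i h; rewrite !fi_len // y1 y2.
Qed.

Lemma fi_in i y : c < y < d -> lapmin i < fi i y < lapmax i.
Proof.
move=> /andP[y1 y2].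
case: (rho_sign i) => h.
  by have [-> ->] := mm_p i h; rewrite !fi_ltp // y1 y2.
by have [-> ->] := mm_n i h; rewrite !fi_ltn // y1 y2.
Qed.

Lemma Finv_in i x : lapmin i < x < lapmax i -> c < Finv i x < d.
Proof.
rewrite -{1 2}(fiK i x) => /andP[y1 y2].
case: (rho_sign i) => h.
  by move: y1 y2; have [-> ->] := mm_p i h; rewrite !fi_ltp // => -> ->.
by move: y1 y2; have [-> ->] := mm_n i h; rewrite !fi_ltn // => -> ->.
Qed.

Lemma open_in_lap i x : lapmin i < x < lapmax i -> lap i x.
Proof.
move=> hx; exists (Finv i x); last exact: fiK.
by have /andP[a b] := Finv_in i x hx; rewrite /Iset /= !ltW.
Qed.

Lemma lap_interior i x : lapmin i < x < lapmax i -> interior (lap i) x.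
Proof.
move=> hx.
have : `]lapmin i, lapmax i[ `<=` interior (lap i).
  rewrite -open_subsetE; last exact: itv_open.
  by move=> y /=; rewrite in_itv /= => /(open_in_lap i y).
by apply; rewrite /= in_itv.
Qed.

Lemma lap_unique_pt i k x : lapmin i < x < lapmax i -> lapmin k < x < lapmax k -> i = k.
Proof.
move=> h1 h2; apply/eqP; apply/negPn/negP => /Hint H.
have : (interior (lap i) `&` interior (lap k)) x by split; [exact: lap_interior h1|exact: lap_interior h2].
by rewrite H.
Qed.

Local Notation Evals := (Evals rho varrho c d hl hr).

Lemma EvalsP x : x \in Evals ->
  x = c \/ x = d \/ x = hl \/ x = hr \/ exists i, x = fi i c \/ x = fi i d.
Proof.
rewrite /Defs.Evals /= !inE mem_cat.
case/orP=> [/eqP->|]; first by left.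
case/orP=> [/eqP->|]; first by right; left.
case/orP=> [/eqP->|]; first by right; right; left.
case/orP=> [/eqP->|]; first by right; right; right; left.
case/orP=> /mapP[i _ ->]; right; right; right; right; exists i; [left|right]; done.
Qed.

Lemma Evals_c : c \in Evals. Proof. by rewrite /Defs.Evals /= !inE eqxx. Qed.
Lemma Evals_d : d \in Evals. Proof. by rewrite /Defs.Evals /= !inE eqxx !orbT. Qed.
Lemma Evals_fc i : fi i c \in Evals.
Proof. by rewrite /Defs.Evals /= !inE mem_cat (map_f (fun i => fi i c)) ?mem_enum ?orbT. Qed.
Lemma Evals_fd i : fi i d \in Evals.
Proof. by rewrite /Defs.Evals /= !inE !mem_cat (map_f (fun i => fi i d)) ?mem_enum ?orbT. Qed.

Lemma overlap (a b a' b' : R) : a < b -> a' < b' -> a < b' -> a' < b ->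
  exists y, (a < y < b) && (a' < y < b').
Proof.
move=> *; case: (leP a a') => h1; case: (leP b b') => h2.
- by exists ((a' + b) / 2); apply/andP; split; apply/andP; split; lra.
- by exists ((a' + b') / 2); apply/andP; split; apply/andP; split; lra.
- by exists ((a + b) / 2); apply/andP; split; apply/andP; split; lra.
- by exists ((a + b') / 2); apply/andP; split; apply/andP; split; lra.
Qed.

Lemma fi_cd_mm i : (fi i c = lapmin i \/ fi i c = lapmax i) /\
                   (fi i d = lapmin i \/ fi i d = lapmax i).
Proof.
case: (rho_sign i) => h.
  by have [-> ->] := mm_p i h; split; [left|right].
by have [-> ->] := mm_n i h; split; [right|left].
Qed.

Lemma lapmin_in i : lap i (lapmin i).
Proof.
have Ic : Iset c d c by rewrite /Iset /= lexx Hcd.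
have Id : Iset c d d by rewrite /Iset /= lexx Hcd.
by case: (rho_sign i) => h; [have [-> _] := mm_p i h; exists c|have [-> _] := mm_n i h; exists d].
Qed.

Lemma lapmax_in i : lap i (lapmax i).
Proof.
have Ic : Iset c d c by rewrite /Iset /= lexx Hcd.
have Id : Iset c d d by rewrite /Iset /= lexx Hcd.
by case: (rho_sign i) => h; [have [_ ->] := mm_p i h; exists d|have [_ ->] := mm_n i h; exists c].
Qed.

Lemma hole_lap_disj i y : hl < y < hr -> lapmin i < y < lapmax i -> False.
Proof.
move=> h1 h2; have := Hhole i; rewrite -subset0 => /(_ y); apply; split => //.
exact: open_in_lap.
Qed.

Lemma Evals_I x : x \in Evals -> c <= x <= d.
Proof.
have cd := c_lt_d; have Hh' := Hh.
case/EvalsP=> [->|[->|[->|[->|[i [->|->]]]]]].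
- by rewrite lexx Hcd.
- by rewrite lexx Hcd.
- have /andP[a b] := hole_I ((hl + hr) / 2) ltac:(apply/andP; split; lra).
  case: (leP c hl) => h; last first.
    case: (leP c hr) => h'.
      have /andP[a' b'] := hole_I ((hl + c) / 2) ltac:(apply/andP; split; lra). lra.
    lra.
  apply/andP; split => //; lra.
- have /andP[a b] := hole_I ((hl + hr) / 2) ltac:(apply/andP; split; lra).
  case: (leP hr d) => h; last first.
    case: (leP hl d) => h'.
      have /andP[a' b'] := hole_I ((hr + d) / 2) ltac:(apply/andP; split; lra). lra.
    lra.
  apply/andP; split => //; lra.
- by apply: (lap_I i); exists c => //; rewrite /Iset /= lexx Hcd.
- by apply: (lap_I i); exists d => //; rewrite /Iset /= lexx Hcd.
Qed.

Lemma KL x k : x \in Evals -> lapmin k < x < lapmax k -> False.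
Proof.
move=> + /andP[x1 x2]; have Hh' := Hh.
have m1 := lapmin_in k; have m2 := lapmax_in k.
case/EvalsP=> [ex|[ex|[ex|[ex|[i ex]]]]]; try subst x.
- by have /andP[+ _] := lap_I k _ m1; rewrite leNgt x1.
- by have /andP[_ +] := lap_I k _ m2; rewrite leNgt x2.
- have [y /andP[y1 y2]] := @overlap hl hr (lapmin k) (lapmax k) Hh (lapmin_lt k) x2 ltac:(lra).
  exact: (hole_lap_disj k y).
- have [y /andP[y1 y2]] := @overlap hl hr (lapmin k) (lapmax k) Hh (lapmin_lt k) ltac:(lra) x1.
  exact: (hole_lap_disj k y).
- have hm := lapmin_lt i; have hM := lapmin_lt k.
  have [e1 e2] := fi_cd_mm i.
  have : x = lapmin i \/ x = lapmax i by case: ex => ->.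
  case=> e; rewrite e in x1 x2.
  + have [y /andP[y1 y2]] := @overlap _ _ _ _ hm hM x2 ltac:(lra).
    have ik := lap_unique_pt i k y y1 y2; subst i; lra.
  + have [y /andP[y1 y2]] := @overlap _ _ _ _ hm hM ltac:(lra) x1.
    have ik := lap_unique_pt i k y y1 y2; subst i; lra.
Qed.

Local Notation lap_of_pt := (lap_of_pt rho varrho c d).
Local Notation Fpt := (Fpt rho varrho c d).
Local Notation Fder := (Fder rho varrho c d).
Local Notation is_endpt := (is_endpt rho varrho c d hl hr).

Lemma lap_unique_min i k : lapmin i = lapmin k -> i = k.
Proof.
move=> e; have hm := lapmin_lt i; have hM := lapmin_lt k.
have [y /andP[y1 y2]] := @overlap _ _ _ _ hm hM ltac:(lra) ltac:(lra).
exact: lap_unique_pt y1 y2.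
Qed.

Lemma lap_unique_max i k : lapmax i = lapmax k -> i = k.
Proof.
move=> e; have hm := lapmin_lt i; have hM := lapmin_lt k.
have [y /andP[y1 y2]] := @overlap _ _ _ _ hm hM ltac:(lra) ltac:(lra).
exact: lap_unique_pt y1 y2.
Qed.

Lemma lopt_true x i : x \in Evals -> lap_of_pt (x, true) = Some i -> x = lapmin i.
Proof.
move=> ex; rewrite /Defs.lap_of_pt; case: pickP => // k /= /andP[h1 h2] [<-].
move: h1; rewrite le_eqVlt => /orP[/eqP -> //|h1].
by case: (KL x k ex); rewrite h1.
Qed.

Lemma lopt_false x i : x \in Evals -> lap_of_pt (x, false) = Some i -> x = lapmax i.
Proof.
move=> ex; rewrite /Defs.lap_of_pt; case: pickP => // k /= /andP[h1 h2] [<-].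
move: h2; rewrite le_eqVlt => /orP[/eqP -> //|h2].
by case: (KL x k ex); rewrite h1.
Qed.

Lemma lopt_true_some x k : x \in Evals -> x = lapmin k -> lap_of_pt (x, true) = Some k.
Proof.
move=> ex e; have := lopt_true x; rewrite /Defs.lap_of_pt; case: pickP.
  by move=> i _ /(_ i ex erefl); rewrite e => /lap_unique_min ->.
by move=> /(_ k) /=; rewrite e lexx lapmin_lt.
Qed.

Lemma lopt_false_some x k : x \in Evals -> x = lapmax k -> lap_of_pt (x, false) = Some k.
Proof.
move=> ex e; have := lopt_false x; rewrite /Defs.lap_of_pt; case: pickP.
  by move=> i _ /(_ i ex erefl); rewrite e => /lap_unique_max ->.
by move=> /(_ k) /=; rewrite e lexx lapmin_lt.
Qed.

Lemma Finv_min i : Finv i (lapmin i) = if 0 < rho i then c else d.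
Proof.
case: (rho_sign i) => h.
  by have [-> _] := mm_p i h; rewrite FinvK h.
by have [-> _] := mm_n i h; rewrite FinvK ltNge (ltW h).
Qed.

Lemma Finv_max i : Finv i (lapmax i) = if 0 < rho i then d else c.
Proof.
case: (rho_sign i) => h.
  by have [_ ->] := mm_p i h; rewrite FinvK h.
by have [_ ->] := mm_n i h; rewrite FinvK ltNge (ltW h).
Qed.

Lemma Fpt_true x i : x \in Evals -> lap_of_pt (x, true) = Some i ->
  Fpt (x, true) = Some (if 0 < rho i then (c, true) else (d, false)).
Proof.
move=> ex h; rewrite /Defs.Fpt h /= (lopt_true x i ex h) Finv_min.
by case: ifP.
Qed.

Lemma Fpt_false x i : x \in Evals -> lap_of_pt (x, false) = Some i ->
  Fpt (x, false) = Some (if 0 < rho i then (d, false) else (c, true)).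
Proof.
move=> ex h; rewrite /Defs.Fpt h /= (lopt_false x i ex h) Finv_max.
by case: ifP.
Qed.

Lemma endpt_c : is_endpt (c, true).
Proof.
have := c_lt_d; rewrite /Defs.is_endpt /= Evals_c eqxx /= => h.
by rewrite andbT (lt_eqF h).
Qed.

Lemma endpt_d : is_endpt (d, false).
Proof.
have := c_lt_d; rewrite /Defs.is_endpt /= Evals_d eqxx /= => h.
by rewrite andbT (gt_eqF h).
Qed.

Lemma Fpt_endpt p p' : is_endpt p -> Fpt p = Some p' -> p' = (c, true) \/ p' = (d, false).
Proof.
case: p => x b /andP[/= ex _].
move: (erefl (lap_of_pt (x, b))); case: {2}(lap_of_pt (x, b)) => [i|] e; last first.
  by rewrite /Defs.Fpt e.
case: b e => e.
  by rewrite (Fpt_true x i ex e) => -[<-]; case: ifP; [left|right].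
by rewrite (Fpt_false x i ex e) => -[<-]; case: ifP; [right|left].
Qed.

Lemma Fpt_endpt' p p' : is_endpt p -> Fpt p = Some p' -> is_endpt p'.
Proof. by move=> h /(Fpt_endpt p p' h) [->|->]; [exact: endpt_c|exact: endpt_d]. Qed.

Lemma iterF_endpt k e p : is_endpt e -> iterF rho varrho c d k e = Some p -> is_endpt p.
Proof.
move=> he; elim: k p => [|k IH] p /=; first by move=> [<-].
rewrite /Defs.iterF /= -/(iterF rho varrho c d k e).
case E: (iterF rho varrho c d k e) => [p0|] //= h.
exact: (Fpt_endpt' _ _ (IH _ E) h).
Qed.

Variable ys : seq (R * bool).
Hypotheses (Hsort : sorted (@ltpt R) ys)
  (Hys : forall p, p \in ys <-> orbit_points rho varrho c d hl hr p).

Lemma ysE p : (p \in ys) = is_endpt p.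
Proof.
apply/idP/idP.
  by move/Hys => [e he [k hk]]; exact: (iterF_endpt k e p he hk).
by move=> h; apply/Hys; exists p => //; exists 0%N.
Qed.

Lemma ltpt_irr : irreflexive (@ltpt R).
Proof. by case=> x b; rewrite /ltpt /= ltxx /=; case: b; rewrite ?andbF. Qed.

Lemma ltpt_fst (p q : R * bool) : ltpt p q -> p.1 <= q.1.
Proof. by rewrite /ltpt => /orP[/ltW //|/and3P[/eqP -> _ _]]. Qed.

Lemma ltpt_trans : transitive (@ltpt R).
Proof.
case=> y b [x a] [z e]; rewrite /ltpt /=.
case/orP=> [h1|/and3P[/eqP e1 h1 h2]]; case/orP=> [h3|/and3P[/eqP e2 h3 h4]].
- by rewrite (lt_trans h1 h3).
- by rewrite -e2 h1.
- by rewrite e1 h3.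
- by rewrite h2 in h3.
Qed.

Local Notation vals := (vals ys).
Local Notation mm := (mm ys).

Lemma valsE x : (x \in vals) = (x \in Evals).
Proof.
rewrite /Defs.vals mem_undup; apply/idP/idP.
  by case/mapP=> p; rewrite ysE => /andP[+ _] ->.
move=> ex; have cd := c_lt_d.
case: (eqVneq x d) => [xd|xd].
  apply/mapP; exists (x, false) => //; rewrite ysE /Defs.is_endpt /= ex xd eqxx /=.
  by rewrite (gt_eqF cd).
apply/mapP; exists (x, true) => //; rewrite ysE /Defs.is_endpt /= ex (negbTE xd) /=.
by rewrite andbF.
Qed.

Lemma vals_sorted : sorted <%R vals.
Proof.
rewrite lt_sorted_uniq_le undup_uniq /=.
apply: (subseq_sorted le_trans (undup_subseq _)).
by rewrite sorted_map; apply: sub_sorted Hsort => p q /= /ltpt_fst.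
Qed.

Lemma vals_uniq : uniq vals.
Proof. exact: undup_uniq. Qed.

Lemma size_vals : size vals = mm.+1.
Proof.
rewrite /Defs.mm prednK // lt0n size_eq0; apply/eqP => e.
by have := Evals_c; rewrite -valsE e.
Qed.

Lemma vals_lt {i j} : (i < j)%N -> (j <= mm)%N -> nth 0 vals i < nth 0 vals j.
Proof.
move=> ij jm; rewrite (lt_sorted_ltn_nth 0 vals_sorted) // inE size_vals; lia.
Qed.

Lemma vals_le {i j} : (i <= j)%N -> (j <= mm)%N -> nth 0 vals i <= nth 0 vals j.
Proof.
rewrite leq_eqVlt => /orP[/eqP -> //|ij] jm; exact/ltW/vals_lt.
Qed.

Lemma vals_Evals {i} : (i <= mm)%N -> nth 0 vals i \in Evals.
Proof. by move=> h; rewrite -valsE mem_nth // size_vals. Qed.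

Lemma vals_idx {x} : x \in Evals -> exists2 t, (t <= mm)%N & x = nth 0 vals t.
Proof.
rewrite -valsE => h; exists (index x vals); last by rewrite nth_index.
by rewrite -ltnS -size_vals index_mem.
Qed.

Lemma vals_lt_inv {i j} : (i <= mm)%N -> (j <= mm)%N -> nth 0 vals i < nth 0 vals j -> (i < j)%N.
Proof.
move=> im jm h; rewrite ltnNge; apply/negP => ji.
by have := vals_le ji im; rewrite leNgt h.
Qed.

Lemma vals_eq_inv {i j} : (i <= mm)%N -> (j <= mm)%N -> nth 0 vals i = nth 0 vals j -> i = j.
Proof.
move=> im jm /eqP; rewrite nth_uniq ?size_vals ?vals_uniq ?ltnS //; by move/eqP.
Qed.

Lemma vals0 : nth 0 vals 0 = c.
Proof.
have [t tm e] := vals_idx Evals_c.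
have /andP[h _] := Evals_I _ (vals_Evals (leq0n mm)).
case: t tm e => [//|t] tm e.
by have := vals_lt (ltn0Sn t) tm; rewrite -e ltNge h.
Qed.

Lemma valsN : nth 0 vals mm = d.
Proof.
have [t tm e] := vals_idx Evals_d.
have /andP[_ h] := Evals_I _ (vals_Evals (leqnn mm)).
move: tm; rewrite leq_eqVlt => /orP[/eqP tm|tm]; first by rewrite -tm -e.
by have := vals_lt tm (leqnn mm); rewrite -e ltNge h.
Qed.

Lemma mm_gt0 : (0 < mm)%N.
Proof.
rewrite lt0n; apply/eqP => e; have := c_lt_d.
by rewrite -vals0 -valsN e ltxx.
Qed.

Definition gy (r : nat) : R * bool :=
  if odd r then (nth 0 vals r./2.+1, false) else (nth 0 vals r./2, true).

Lemma gy_sorted : sorted (@ltpt R) (mkseq gy mm.*2).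
Proof.
apply/(sortedP (0, false)) => r; rewrite size_mkseq => hr0.
rewrite !nth_mkseq; try lia.
rewrite /gy /=; case: (boolP (odd r)) => o /=.
  have -> : uphalf r = r./2.+1 by lia.
  by rewrite /ltpt /= eqxx ltxx.
have -> : uphalf r = r./2 by lia.
by rewrite /ltpt /= vals_lt //; lia.
Qed.

Lemma gy_endpt r : (r < mm.*2)%N -> is_endpt (gy r).
Proof.
move=> hr0; rewrite /gy; case: (boolP (odd r)) => o.
  have h1 : (r./2.+1 <= mm)%N by lia.
  rewrite /Defs.is_endpt /= vals_Evals //= andbT.
  by rewrite andbF andbT -vals0 gt_eqF // vals_lt.
have h1 : (r./2 < mm)%N by lia.
rewrite /Defs.is_endpt /= vals_Evals ?(ltnW h1) //= andbT.
by rewrite andbF /= -valsN lt_eqF // vals_lt.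
Qed.

Lemma ys_mkseq : ys = mkseq gy mm.*2.
Proof.
apply: (irr_sorted_eq ltpt_trans ltpt_irr Hsort gy_sorted) => p.
rewrite ysE; apply/idP/idP; last first.
  by case/mapP=> r; rewrite mem_iota add0n => /andP[_ hr0] ->; apply: gy_endpt.
case: p => x b /and3P[/= ex h1 h2].
have [t tm e] := vals_idx ex.
apply/mapP; case: b h1 h2 => /= h1 h2.
  have tm' : (t < mm)%N.
    rewrite ltn_neqAle tm andbT; apply/eqP => et.
    by move: h2; rewrite e et valsN eqxx.
  exists t.*2; first by rewrite mem_iota; lia.
  by rewrite /gy odd_double doubleK e.
have t0 : (0 < t)%N.
  rewrite lt0n; apply/eqP => et.
  by move: h1; rewrite e et vals0 eqxx.
exists (t.-1).*2.+1; first by rewrite mem_iota; lia.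
rewrite /gy /= odd_double /=.
have h3 : (uphalf (t.-1).*2).+1 = t by lia.
by rewrite h3 e.
Qed.

Lemma ys_uniq : uniq ys.
Proof. exact: (sorted_uniq ltpt_trans ltpt_irr). Qed.

Local Notation qq := (qq ys).
Local Notation yp := (yp ys).

Lemma qqE : qq = mm.*2.
Proof. by rewrite /Defs.qq {1}ys_mkseq size_mkseq. Qed.

Lemma ypE r : (r < mm.*2)%N -> yp r = gy r.
Proof. by move=> h; rewrite /Defs.yp {1}ys_mkseq nth_mkseq. Qed.

Lemma index_c : index (c, true) ys = 0%N.
Proof.
have h0 : (0 < size ys)%N by have := qqE; rewrite /Defs.qq => ->; have := mm_gt0; lia.
have := index_uniq (0, false) h0 ys_uniq.
by rewrite -/(yp 0) ypE ?qqE /gy /= ?vals0 //; have := mm_gt0; lia.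
Qed.

Lemma index_d : index (d, false) ys = (mm.*2).-1.
Proof.
have h0 : ((mm.*2).-1 < size ys)%N by have := qqE; rewrite /Defs.qq => ->; have := mm_gt0; lia.
have := index_uniq (0, false) h0 ys_uniq.
rewrite -/(yp _) ypE; last by have := mm_gt0; lia.
rewrite /gy; have -> : odd (mm.*2).-1 by have := mm_gt0; lia.
have h3 : ((mm.*2).-1)./2.+1 = mm by have := mm_gt0; lia.
by rewrite h3 valsN.
Qed.

Lemma pairfirstE r : pairfirst rho varrho c d hl hr ys r = odd r && (r.+1 < mm.*2)%N.
Proof.
rewrite /Defs.pairfirst -/qq qqE.
case: (ltnP r.+1 (mm.*2)) => h; last by rewrite andbF.
rewrite andTb !ypE ?(ltnW h) // /gy /=.
case: (boolP (odd r)) => o //=.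
have -> : uphalf r = r./2.+1 by lia.
rewrite eqxx /= /Defs.is_turning vals_Evals /=; last by lia.
by rewrite -vals0 -valsN !vals_lt //; lia.
Qed.

Lemma pairsecondE r : pairsecond rho varrho c d hl hr ys r = (0 < r)%N && ~~ odd r && (r < mm.*2)%N.
Proof. by rewrite /Defs.pairsecond pairfirstE; case: r => [|r] //=; rewrite negbK. Qed.

Local Notation lap_of_J := (lap_of_J rho varrho c d ys).

Lemma lapmax_Evals i : lapmax i \in Evals.
Proof.
case: (rho_sign i) => h; [have [_ ->] := mm_p i h|have [_ ->] := mm_n i h].
  exact: Evals_fd. exact: Evals_fc.
Qed.

Lemma lapmin_Evals i : lapmin i \in Evals.
Proof.
case: (rho_sign i) => h; [have [-> _] := mm_p i h|have [-> _] := mm_n i h].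
  exact: Evals_fc. exact: Evals_fd.
Qed.

Lemma J_lap j k : (j < mm)%N -> lap_of_J j = Some k ->
  nth 0 vals j = lapmin k /\ nth 0 vals j.+1 = lapmax k.
Proof.
move=> jm; rewrite /Defs.lap_of_J; case: pickP => // k' /asboolP sub [<-].
have lohi : nth 0 vals j < nth 0 vals j.+1 by apply: vals_lt.
set lo := nth 0 vals j in lohi sub *; set hi := nth 0 vals j.+1 in lohi sub *.
have exlo : lo \in Evals by apply: vals_Evals; lia.
have exhi : hi \in Evals by apply: vals_Evals; lia.
have h1 : lapmin k' <= lo.
  rewrite leNgt; apply/negP => h.
  have [y /andP[y1 y2]] := @overlap lo hi (lo - 1) (lapmin k') lohi ltac:(lra) h ltac:(lra).
  have /andP[+ _] := lap_bounds k' y (sub y y1).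
  by move/andP: y2 => [_ y2]; rewrite leNgt y2.
have h2 : hi <= lapmax k'.
  rewrite leNgt; apply/negP => h.
  have [y /andP[y1 y2]] := @overlap lo hi (lapmax k') (hi + 1) lohi ltac:(lra) ltac:(lra) h.
  have /andP[_ +] := lap_bounds k' y (sub y y1).
  by move/andP: y2 => [y2 _]; rewrite leNgt y2.
split.
  move: h1; rewrite le_eqVlt => /orP[/eqP -> //|h1].
  by case: (KL lo k' exlo); rewrite h1 /=; lra.
move: h2; rewrite le_eqVlt => /orP[/eqP -> //|h2].
by case: (KL hi k' exhi); rewrite h2 /= andbT; lra.
Qed.

Lemma J_none j : (j < mm)%N -> lap_of_J j = None ->
  lap_of_pt (nth 0 vals j, true) = None /\ lap_of_pt (nth 0 vals j.+1, false) = None.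
Proof.
move=> jm hJ.
have lohi : nth 0 vals j < nth 0 vals j.+1 by apply: vals_lt.
have exlo : nth 0 vals j \in Evals by apply: vals_Evals; lia.
have exhi : nth 0 vals j.+1 \in Evals by apply: vals_Evals; lia.
have contra i : nth 0 vals j.+1 <= lapmax i -> lapmin i <= nth 0 vals j -> False.
  move=> a b; move: hJ; rewrite /Defs.lap_of_J; case: pickP => // /(_ i) /=.
  rewrite asboolT //; move=> y /= /andP[y1 y2]; rewrite /Defs.Jlo /Defs.Jhi in y1 y2; apply: open_in_lap; apply/andP; split; lra.
split.
  case E: (lap_of_pt _) => [i|] //; exfalso.
  have e := lopt_true _ _ exlo E.
  have [t tm et] := vals_idx (lapmax_Evals i).
  have := lapmin_lt i; rewrite -e et => /(vals_lt_inv _ tm) jt.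
  apply: (contra i); last by rewrite e.
  by rewrite et; apply: vals_le tm; apply: jt; lia.
case E: (lap_of_pt _) => [i|] //; exfalso.
have e := lopt_false _ _ exhi E.
have [t tm et] := vals_idx (lapmin_Evals i).
have := lapmin_lt i; rewrite -e et => /(vals_lt_inv tm _) jt.
apply: (contra i); first by rewrite e.
by rewrite et; apply: vals_le; [have := jt jm; lia|lia].
Qed.

Definition ww (j : nat) : R :=
  match lap_of_J j with Some k => `|(rho k)^-1| `^ (- beta) | None => 0 end.

Lemma Q_entry (i j : 'I_mm) : Qmx rho varrho c d ys beta i j = ww j.
Proof.
rewrite mxE /ww; case E: (lap_of_J j) => [k|] //.
rewrite asboolT //.
have [e1 e2] := J_lap j k (ltn_ord j) E.
move=> x /= /andP[x1 x2]; rewrite /Defs.Jlo /Defs.Jhi in x1 x2.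
have im := ltn_ord i.
have a1 : c <= nth 0 vals i by rewrite -vals0; apply: vals_le; lia.
have a2 : nth 0 vals i.+1 <= d by rewrite -valsN; apply: vals_le; lia.
exists (fi k x); last exact: FinvK.
rewrite /Defs.intJ /Defs.Jlo /Defs.Jhi /= e1 e2; apply: fi_in; apply/andP; split; lra.
Qed.

Definition vv (s : nat) : R :=
  Num.sg (Fder (yp s)) * `|Fder (yp s)| `^ (- beta).

Lemma V_c (r s : 'I_qq) : Fpt (yp s) = Some (c, true) ->
  Vmx rho varrho c d hl hr ys beta r s =
  vv s * (if (r <= (s./2).*2)%N then (-1) ^+ r else 0).
Proof.
move=> h; rewrite mxE h ysE endpt_c index_c -/(vv s).
have hr0 : (r < mm.*2)%N by rewrite -qqE ltn_ord.
have hs0 : (s < mm.*2)%N by rewrite -qqE ltn_ord.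
rewrite !pairfirstE !pairsecondE /=.
rewrite -signr_odd; case: (boolP (odd r)) => o; rewrite /= ?o ?(negbTE o) /= ?expr0 ?expr1;
repeat (case: ifP => /= ?); rewrite ?mulr0 ?mulr1 ?mulrN1 //; try (exfalso; lia).
Qed.

Lemma V_d (r s : 'I_qq) : Fpt (yp s) = Some (d, false) ->
  Vmx rho varrho c d hl hr ys beta r s =
  vv s * (if ((s./2).*2 < r)%N then (-1) ^+ r.+1 else 0).
Proof.
move=> h; rewrite mxE h ysE endpt_d index_d -/(vv s).
have hr0 : (r < mm.*2)%N by rewrite -qqE ltn_ord.
have hs0 : (s < mm.*2)%N by rewrite -qqE ltn_ord.
rewrite !pairfirstE !pairsecondE /=.
rewrite -signr_odd; case: (boolP (odd r)) => o; rewrite /= ?o ?(negbTE o) /= ?expr0 ?expr1;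
repeat (case: ifP => /= ?); rewrite ?mulr0 ?mulr1 ?mulrN1 //; try (exfalso; lia).
Qed.

Lemma vals_eqb i k : (i <= mm)%N -> (k <= mm)%N ->
  (nth 0 vals i == nth 0 vals k) = (i == k).
Proof. by move=> im km; rewrite nth_uniq ?size_vals ?vals_uniq ?ltnS. Qed.

Lemma B_entry (s : 'I_qq) (j : 'I_mm) : Bmx ys s j =
  if nat_of_ord s == j.*2 then -1 else if nat_of_ord s == j.*2.+1 then 1 else 0.
Proof.
have hs0 : (s < mm.*2)%N by rewrite -qqE ltn_ord.
have jm := ltn_ord j.
rewrite mxE ypE // /gy /Defs.Jlo /Defs.Jhi.
case: (boolP (odd s)) => o; rewrite !xpair_eqE /= ?andbT ?andbF.
  rewrite vals_eqb; try lia.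
  by repeat case: ifP => /eqP ?; try (exfalso; lia).
rewrite vals_eqb; try lia.
by repeat case: ifP => /eqP ?; try (exfalso; lia).
Qed.

Lemma sum_two (m : nat) (F : 'I_m -> R) (a b : 'I_m) : a != b ->
  (forall i, i != a -> i != b -> F i = 0) -> \sum_i F i = F a + F b.
Proof.
move=> ab H; rewrite (bigD1 a) //= (bigD1 b) 1?eq_sym //= big1 ?addr0 // => i /andP[ia ib].
exact: H.
Qed.

Lemma sum_one (m : nat) (F : 'I_m -> R) (a : 'I_m) :
  (forall i, i != a -> F i = 0) -> \sum_i F i = F a.
Proof. by move=> H; rewrite (bigD1 a) //= big1 ?addr0. Qed.

Lemma yp_lo (j : 'I_mm) : yp j.*2 = (nth 0 vals j, true).
Proof.
have jm := ltn_ord j.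
by rewrite ypE /gy ?odd_double ?doubleK //; lia.
Qed.

Lemma yp_hi (j : 'I_mm) : yp j.*2.+1 = (nth 0 vals j.+1, false).
Proof.
have jm := ltn_ord j.
rewrite ypE /gy /= ?odd_double /=; last by lia.
by have -> : uphalf j.*2 = j by lia.
Qed.

Lemma main_eq : Bmx ys *m Qmx rho varrho c d ys beta = Vmx rho varrho c d hl hr ys beta *m Bmx ys.
Proof.
apply/matrixP => r j; rewrite !mxE.
have hr0 : (r < mm.*2)%N by rewrite -qqE ltn_ord.
have jm := ltn_ord j.
have h2 : (r./2 < mm)%N by lia.
have L : \sum_i Bmx ys r i * Qmx rho varrho c d ys beta i j =
         (if odd r then 1 else -1) * ww j.
  rewrite (bigD1 (Ordinal h2)) //= big1 ?addr0.
    rewrite B_entry Q_entry /=.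
    by case: (boolP (odd r)) => o; repeat case: ifP => /eqP ?; rewrite ?mulN1r ?mul1r //; try (exfalso; lia).
  move=> i; rewrite -val_eqE /= => ne; rewrite B_entry.
  by repeat case: ifP => /eqP ?; rewrite ?mul0r //; exfalso; lia.
have s1 : (j.*2 < qq)%N by rewrite qqE; lia.
have s2 : (j.*2.+1 < qq)%N by rewrite qqE; lia.
rewrite L (bigD1 (Ordinal s1)) //= (bigD1 (Ordinal s2)) /=; last by rewrite -val_eqE /=; lia.
rewrite big1 ?addr0; last first.
  move=> i /andP[]; rewrite -!val_eqE /= => n1 n2; rewrite B_entry.
  by repeat case: ifP => /eqP ?; rewrite ?mulr0 //; exfalso; lia.
rewrite !B_entry /= eqxx.
have -> : (j.*2.+1 == j.*2)%N = false by lia.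
rewrite eqxx mulrN1 mulr1.
have exlo : nth 0 vals j \in Evals by apply: vals_Evals; lia.
have exhi : nth 0 vals j.+1 \in Evals by apply: vals_Evals; lia.
rewrite /ww; case E: (lap_of_J j) => [k|]; last first.
  have [n1 n2] := J_none j jm E.
  rewrite !mxE yp_lo yp_hi /Defs.Fpt n1 n2.
  by rewrite oppr0 addr0 mulr0.
have [e1 e2] := J_lap j k jm E.
have l1 := lopt_true_some _ k exlo e1.
have l2 := lopt_false_some _ k exhi e2.
have F1 := Fpt_true _ k exlo l1.
have F2 := Fpt_false _ k exhi l2.
have D1 : Fder (yp (Ordinal s1)) = (rho k)^-1 by rewrite yp_lo /Defs.Fder l1.
have D2 : Fder (yp (Ordinal s2)) = (rho k)^-1 by rewrite yp_hi /Defs.Fder l2.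
case: (rho_sign k) => hk.
  rewrite hk in F1 F2.
  rewrite (V_c r (Ordinal s1)); last by rewrite yp_lo.
  rewrite (V_d r (Ordinal s2)); last by rewrite yp_hi.
  rewrite /vv D1 D2 gtr0_sg ?invr_gt0 // mul1r /=.
  have -> : (j.*2.+1)./2.*2 = j.*2 by lia.
  have -> : (j.*2)./2.*2 = j.*2 by lia.
  set P := `|(rho k)^-1| `^ (- beta).
  rewrite exprS -signr_odd; case: (odd r); case: leqP => h1; rewrite /= ?expr0 ?expr1; lra.
rewrite (lt_gtF hk) in F1 F2.
rewrite (V_d r (Ordinal s1)); last by rewrite yp_lo.
rewrite (V_c r (Ordinal s2)); last by rewrite yp_hi.
rewrite /vv D1 D2 ltr0_sg ?invr_lt0 // /=.
have -> : (j.*2.+1)./2.*2 = j.*2 by lia.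
have -> : (j.*2)./2.*2 = j.*2 by lia.
set P := `|(rho k)^-1| `^ (- beta).
rewrite exprS -signr_odd; case: (odd r); case: leqP => h1; rewrite /= ?expr0 ?expr1; lra.
Qed.

End Pf.

Theorem lemma1 (R : realType) (n : nat) (rho varrho : 'I_n -> R)
    (c d hl hr beta : R) (ys : seq (R * bool)) :
  c <= d ->
  (forall i, 0 < `|rho i| < 1) ->
  open_set_condition rho varrho ->
  hl < hr ->
  Iset c d = hole hl hr `|` \bigcup_(i in setT) lap rho varrho c d i ->
  (forall i j, i != j ->
     interior (lap rho varrho c d i) `&` interior (lap rho varrho c d j) = set0) ->
  (forall i, hole hl hr `&` lap rho varrho c d i = set0) ->
  (forall e, is_endpt rho varrho c d hl hr e ->
     finite_set (forward_orbit rho varrho c d e)) ->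
  sorted (@ltpt R) ys ->
  (forall p, p \in ys <-> orbit_points rho varrho c d hl hr p) ->
  Bmx ys *m Qmx rho varrho c d ys beta
  = Vmx rho varrho c d hl hr ys beta *m Bmx ys.
Proof.
move=> Hcd Hrho _ Hh HI Hint Hhole _ Hsort Hys.
exact: (@main_eq R n rho varrho c d hl hr beta Hcd Hrho Hh HI Hint Hhole ys Hsort Hys).
Qed.
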